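(* Let $R$ be a commutative ring. Every $GV$-torsion $R$-module is absolutely $w$-pure.
   Context: All rings are commutative with identity. A $GV$-ideal of $R$ is a finitely generated ideal $J$ of $R$ such that the natural homomorphism $R\to \mathrm{Hom}_R(J,R)$ is an isomorphism; $GV(R)$ denotes the set of $GV$-ideals of $R$. For an $R$-module $M$, $\mathrm{tor}_{GV}(M)=\{x\in M : Jx=0 \text{ for some } J\in GV(R)\}$; $M$ is $GV$-torsion if $\mathrm{tor}_{GV}(M)=M$. An $R$-module $A$ is absolutely $w$-pure if $\mathrm{Ext}^1_R(N,A)$ is a $GV$-torsion $R$-module for every finitely presented $R$-module $N$. *)

(* Defs.v *)
From HB Require Import structures.
From mathcomp Require Import all_boot all_order all_algebra.
Set Implicit Arguments. Unset Strict Implicit. Unset Printing Implicit Defensive.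
Import GRing.Theory.
Local Open Scope ring_scope.

Section Defs.
Variable R : comPzRingType.

Definition in_ideal (s : seq R) (x : R) : Prop :=
  exists c : 'I_(size s) -> R, x = \sum_(i < size s) c i * s`_i.

Definition in_span (V : lmodType R) (s : seq V) (x : V) : Prop :=
  exists c : 'I_(size s) -> R, x = \sum_(i < size s) c i *: s`_i.

(* The finitely generated ideal J = (s) is a GV-ideal: the natural map
   R -> Hom_R(J, R), r |-> (x |-> r x), is injective and surjective. *)
Definition GV_ideal (s : seq R) : Prop :=
  (forall r : R, (forall x, in_ideal s x -> r * x = 0) -> r = 0) /\
  (forall f : R -> R,
     (forall x y, in_ideal s x -> in_ideal s y -> f (x + y) = f x + f y) ->
     (forall a x, in_ideal s x -> f (a * x) = a * f x) ->
     exists r : R, forall x, in_ideal s x -> f x = r * x).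

Definition GV_torsion_elt (M : lmodType R) (x : M) : Prop :=
  exists s : seq R, GV_ideal s /\ forall a, in_ideal s a -> a *: x = 0.

Definition GV_torsion (M : lmodType R) : Prop :=
  forall x : M, GV_torsion_elt x.

Definition fin_presentation (N : lmodType R) (n : nat)
    (pi : {linear 'rV[R]_n -> N}) : Prop :=
  (forall y : N, exists x, pi x = y) /\
  exists s : seq 'rV[R]_n, forall x, pi x = 0 <-> in_span s x.

(* Ext^1_R(N, A) computed from the presentation 0 -> K -> R^n -> N -> 0,
   K = ker pi:  Ext^1_R(N,A) = Hom_R(K,A) / image(Hom_R(R^n,A)),
   with r.[g] = [r g].  The class of g : K -> A (given as a function on R^n
   which is R-linear on K) is GV-torsion iff some GV-ideal J satisfies:
   for every a in J, a g extends to an R-linear map R^n -> A. *)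
Definition Ext1_GV_torsion (N : lmodType R) (n : nat)
    (pi : {linear 'rV[R]_n -> N}) (A : lmodType R) : Prop :=
  forall g : 'rV[R]_n -> A,
    (forall x y, pi x = 0 -> pi y = 0 -> g (x + y) = g x + g y) ->
    (forall (r : R) x, pi x = 0 -> g (r *: x) = r *: g x) ->
    exists s : seq R, GV_ideal s /\
      forall a, in_ideal s a ->
        exists h : {linear 'rV[R]_n -> A},
          forall x, pi x = 0 -> h x = a *: g x.

Definition absolutely_w_pure (A : lmodType R) : Prop :=
  forall (N : lmodType R) (n : nat) (pi : {linear 'rV[R]_n -> N}),
    fin_presentation pi -> Ext1_GV_torsion pi A.

End Defs.

(* Main.v *)
Require Import Defs.
From HB Require Import structures.
From mathcomp Require Import all_boot all_order all_algebra.
From Stdlib Require Import Classical ClassicalEpsilon.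
Set Implicit Arguments. Unset Strict Implicit. Unset Printing Implicit Defensive.
Import GRing.Theory.
Local Open Scope ring_scope.

Section Aux.
Variable R : comPzRingType.
Implicit Types (s : seq R) (x y r a : R).

Lemma ii0 s : in_ideal s 0.
Proof. exists (fun _ => 0); by rewrite big1 // => i _; rewrite mul0r. Qed.

Lemma iiD s x y : in_ideal s x -> in_ideal s y -> in_ideal s (x + y).
Proof.
move=> [c ->] [d ->]; exists (fun i => c i + d i).
by rewrite -big_split; apply: eq_bigr => i _; rewrite mulrDl.
Qed.

Lemma iiM s r x : in_ideal s x -> in_ideal s (r * x).
Proof.
move=> [c ->]; exists (fun i => r * c i).
by rewrite mulr_sumr; apply: eq_bigr => i _; rewrite mulrA.
Qed.

Lemma iimem s a : a \in s -> in_ideal s a.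
Proof.
case/(nthP 0) => i Hi <-.
exists (fun j : 'I_(size s) => ((j : nat) == i)%:R).
rewrite (bigD1 (Ordinal Hi)) //= eqxx mul1r big1 ?addr0 // => j Hj.
have -> : ((j : nat) == i) = false.
  by apply/negbTE; apply: contra Hj => /eqP e; apply/eqP; apply: val_inj.
by rewrite mul0r.
Qed.

Lemma ii_ind s (P : R -> Prop) : P 0 -> (forall x y, P x -> P y -> P (x + y)) ->
  (forall r x, P x -> P (r * x)) -> (forall a, a \in s -> P a) ->
  forall x, in_ideal s x -> P x.
Proof.
move=> P0 PD PM Ps x [c ->].
apply: (big_ind P) => // i _; apply: PM; apply: Ps; exact: mem_nth.
Qed.

Definition pr s1 s2 := [seq x * y | x <- s1, y <- s2].

Lemma iipr s1 s2 x y : in_ideal s1 x -> in_ideal s2 y -> in_ideal (pr s1 s2) (x * y).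
Proof.
move=> Hx; move: x Hx y.
apply: (ii_ind (P := fun x => forall y, in_ideal s2 y -> in_ideal (pr s1 s2) (x * y))).
- by move=> y _; rewrite mul0r; apply: ii0.
- by move=> x x' H1 H2 y Hy; rewrite mulrDl; apply: iiD; auto.
- by move=> r x H y Hy; rewrite -mulrA; apply: iiM; auto.
move=> a Ha y; apply: (ii_ind (P := fun y => in_ideal (pr s1 s2) (a * y))).
- by rewrite mulr0; apply: ii0.
- by move=> u v H1 H2; rewrite mulrDr; apply: iiD.
- by move=> r u H; rewrite mulrCA; apply: iiM.
by move=> b Hb; apply: iimem; apply: allpairs_f.
Qed.

Lemma iipr2 s1 s2 z : in_ideal (pr s1 s2) z -> in_ideal s2 z.
Proof.
apply: ii_ind; [exact: ii0| exact: iiD| move=> *; exact: iiM|].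
move=> a /allpairsP [[u v] [/= Hu Hv ->]]; apply: iiM; exact: iimem.
Qed.

Lemma iipr1 s1 s2 z : in_ideal (pr s1 s2) z -> in_ideal s1 z.
Proof.
apply: ii_ind; [exact: ii0| exact: iiD| move=> *; exact: iiM|].
move=> a /allpairsP [[u v] [/= Hu Hv ->]]; rewrite mulrC; apply: iiM; exact: iimem.
Qed.

Lemma GV1 : GV_ideal [:: (1 : R)].
Proof.
have H1 : in_ideal [:: (1:R)] 1 by apply: iimem; rewrite inE.
split.
  by move=> r H; rewrite -(mulr1 r); apply: H.
move=> f _ Hm; exists (f 1) => x Hx.
by rewrite -{1}(mulr1 x) Hm // mulrC.
Qed.

Lemma GVpr s1 s2 : GV_ideal s1 -> GV_ideal s2 -> GV_ideal (pr s1 s2).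
Proof.
move=> [I1 S1] [I2 S2]; split.
  move=> r H; apply: I2 => y Hy; apply: I1 => x Hx.
  by rewrite mulrAC -mulrA H //; apply: iipr.
move=> f Hadd Hmul.
have E : forall y, exists r, in_ideal s2 y -> forall x, in_ideal s1 x -> f (x * y) = r * x.
  move=> y; case: (classic (in_ideal s2 y)) => Hy; last by exists 0.
  have [r Hr] : exists r, forall x, in_ideal s1 x -> f (x * y) = r * x.
    apply: (S1 (fun x => f (x * y))).
      by move=> x x' Hx Hx'; rewrite mulrDl Hadd //; apply: iipr.
    by move=> a x Hx; rewrite -mulrA Hmul //; apply: iipr.
  by exists r.
pose F y := proj1_sig (constructive_indefinite_description _ (E y)).
have HF : forall y, in_ideal s2 y -> forall x, in_ideal s1 x -> f (x * y) = F y * x.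
  by move=> y; rewrite /F; case: constructive_indefinite_description.
have [r0 Hr0] : exists r, forall y, in_ideal s2 y -> F y = r * y.
  apply: S2.
    move=> y y' Hy Hy'; apply/eqP; rewrite -subr_eq0; apply/eqP; apply: I1 => x Hx.
    rewrite mulrBl mulrDl -(HF _ (iiD Hy Hy')) // -(HF _ Hy) // -(HF _ Hy') //.
    rewrite mulrDr Hadd; try by apply: iipr.
    by apply/eqP; rewrite subr_eq0.
  move=> a y Hy; apply/eqP; rewrite -subr_eq0; apply/eqP; apply: I1 => x Hx.
  rewrite mulrBl -mulrA -(HF _ (iiM a Hy)) // -(HF _ Hy) //.
  rewrite mulrCA (Hmul a (x * y)); last by apply: iipr.
  by apply/eqP; rewrite subr_eq0.
exists r0 => z Hz.
suff : in_ideal (pr s1 s2) z /\ f z = r0 * z by case.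
move: z Hz; apply: ii_ind.
- split; first exact: ii0.
  have := Hmul 0 0 (ii0 _); rewrite mul0r => ->.
  by rewrite mul0r mulr0.
- move=> x y [Hx Ex] [Hy Ey]; split; first exact: iiD.
  by rewrite Hadd // Ex Ey mulrDr.
- move=> r x [Hx Ex]; split; first exact: iiM.
  by rewrite Hmul // Ex mulrCA.
move=> a /allpairsP [[u v] [/= Hu Hv ->]].
split; first by apply: iimem; apply: allpairs_f.
rewrite (HF _ (iimem Hv) _ (iimem Hu)) (Hr0 _ (iimem Hv)).
by rewrite [u * v]mulrC mulrA.
Qed.

Lemma tor_list (A : lmodType R) : GV_torsion A -> forall vs : seq A,
  exists s, GV_ideal s /\ forall a, in_ideal s a -> forall v, v \in vs -> a *: v = 0.
Proof.
move=> HT; elim=> [|v vs [s [Hs Hk]]].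
  by exists [:: 1]; split; [exact: GV1| by []].
have [t [Ht Hv]] := HT v.
exists (pr t s); split; first exact: GVpr.
move=> a Ha w; rewrite inE => /orP [/eqP ->|Hw].
  by apply: Hv; apply: iipr1 Ha.
by apply: Hk => //; apply: iipr2 Ha.
Qed.

End Aux.

Theorem lemma2p3 (R : comPzRingType) (A : lmodType R) :
  GV_torsion A -> absolutely_w_pure A.
Proof.
move=> HT N n pi [_ [ks Hks]] g Hgadd Hgmul.
have [s [Hs Hk]] := tor_list HT [seq g k | k <- ks].
exists s; split => // a Ha.
exists \0 => x Hx.
have Hki : forall i : 'I_(size ks), pi ks`_i = 0.
  move=> i; apply/Hks; exists (fun j : 'I_(size ks) => (j == i)%:R).
  rewrite (bigD1 i) //= eqxx scale1r big1 ?addr0 // => j /negbTE ->.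
  by rewrite scale0r.
have g0 : g 0 = 0.
  have := Hgadd 0 0 (raddf0 pi) (raddf0 pi).
  by rewrite addr0 => /(congr1 (fun v => v - g 0)); rewrite subrr addrK => <-.
have gsum : forall (r : seq 'I_(size ks)) (F : 'I_(size ks) -> 'rV[R]_n),
    (forall i, pi (F i) = 0) -> g (\sum_(i <- r) F i) = \sum_(i <- r) g (F i).
  move=> r F HF; elim: r => [|i r IH]; first by rewrite !big_nil.
  rewrite !big_cons Hgadd ?IH //.
  by rewrite raddf_sum big1_seq // => j _; exact: HF.
have [c Ec] := (proj1 (Hks x) Hx); subst x.
rewrite gsum; last by move=> i; rewrite linearZ_LR Hki scaler0.
rewrite scaler_sumr /= big1 // => i _.
rewrite Hgmul // scalerA mulrC -scalerA (Hk a Ha) ?scaler0 //.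
by apply: map_f; apply: mem_nth.
Qed.
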